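(* Let $t\in\mathbb{C}^\times$. A linear map $T\colon\mathcal{A}\to\mathbb{C}$ is a $g_t$-twisted trace if and only if $T$ vanishes on $\mathcal{A}_i$ for all $i\neq 0$ and, identifying $\mathcal{A}_0=\mathbb{C}[Z,Z^{-1}]$ with $\mathbb{C}[z,z^{-1}]$, \[ T\big(P(q^{-1}z)R(q^{-1}z)-tP(qz)R(qz)\big)=0\qquad\text{for all } R\in\mathbb{C}[z,z^{-1}]. \] Moreover, the space of $g_t$-twisted traces on $\mathcal{A}$ has dimension $n$.
   Context: Let $q\in\mathbb{C}$ with $0<|q|<1$. Let $P\in\mathbb{C}[z,z^{-1}]$ be a Laurent polynomial, $P=az^k+\dots+bz^l$ with $a,b\neq0$, $k\ge l$, and let $n=k-l$ (the number of nonzero roots of $P$ counted with multiplicity); assume $n>0$. The generalized $q$-Weyl algebra $\mathcal{A}=\mathcal{A}_P$ is the $\mathbb{C}$-algebra generated by $u,v,Z,Z^{-1}$ with relations $ZZ^{-1}=Z^{-1}Z=1$, $ZuZ^{-1}=q^2u$, $ZvZ^{-1}=q^{-2}v$, $uv=P(q^{-1}Z)$, $vu=P(qZ)$. For $i\in\mathbb{Z}$ let $\mathcal{A}_i=\{a\in\mathcal{A}: ZaZ^{-1}=q^{2i}a\}$; then $\mathcal{A}=\bigoplus_{i\in\mathbb{Z}}\mathcal{A}_i$, with $\mathcal{A}_i=u^i\mathbb{C}[Z,Z^{-1}]$ for $i\ge0$ and $\mathcal{A}_i=v^{-i}\mathbb{C}[Z,Z^{-1}]$ for $i\le 0$. For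 $t\in\mathbb{C}^\times$, $g_t$ denotes the automorphism of $\mathcal{A}$ with $g_t(u)=tu$, $g_t(v)=t^{-1}v$, $g_t(Z)=Z$. A linear map $T\colon\mathcal{A}\to\mathbb{C}$ is a $g_t$-twisted trace if $T(ab)=T(b\,g_t(a))$ for all $a,b\in\mathcal{A}$. *)

(* Defs.v *)
From HB Require Import structures.
From mathcomp Require Import all_boot all_order all_algebra.
From mathcomp Require Import reals complex.
Set Implicit Arguments. Unset Strict Implicit. Unset Printing Implicit Defensive.
Import Order.TTheory GRing.Theory Num.Theory.
Local Open Scope ring_scope.

Section GWA.
Variable R : realType.
Local Notation C := R[i].

Definition peval (A : algType C) (p : {poly C}) (x : A) : A :=
  \sum_(k < size p) p`_k *: x ^+ k.

(* integer power of x, where xi plays the role of x^{-1} *)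
Definition powz (A : algType C) (x xi : A) (l : int) : A :=
  match l with
  | Posz k => x ^+ k
  | Negz k => xi ^+ k.+1
  end.

Definition lpeval (A : algType C) (l : int) (p : {poly C}) (x xi : A) : A :=
  powz x xi l * peval p x.

(* The defining relations of the generalized q-Weyl algebra A_P, where
   P(z) = z^l * p(z). *)
Definition gwa_rels (q : C) (l : int) (p : {poly C}) (A : algType C)
  (u v Z Zi : A) : Prop :=
  [/\ Z * Zi = 1 /\ Zi * Z = 1,
      Z * u * Zi = (q ^+ 2) *: u,
      Z * v * Zi = (q ^- 2) *: v,
      u * v = lpeval l p (q^-1 *: Z) (q *: Zi)
    & v * u = lpeval l p (q *: Z) (q^-1 *: Zi)].

Definition is_linmap (A B : lmodType C) (f : A -> B) : Prop :=
  forall (c : C) (x y : A), f (c *: x + y) = c *: f x + f y.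

Definition is_alghom (A B : algType C) (f : A -> B) : Prop :=
  [/\ is_linmap f, f 1 = 1 & forall x y, f (x * y) = f x * f y].

(* (A, u, v, Z, Zi) is the algebra presented by generators u, v, Z, Z^{-1}
   and the relations gwa_rels: it satisfies the relations and is universal
   among C-algebras with elements satisfying them. *)
Definition is_gwa (q : C) (l : int) (p : {poly C}) (A : algType C)
  (u v Z Zi : A) : Prop :=
  gwa_rels q l p u v Z Zi /\
  forall (B : algType C) (u' v' Z' Zi' : B), gwa_rels q l p u' v' Z' Zi' ->
    exists f : A -> B,
      [/\ is_alghom f, f u = u', f v = v', f Z = Z' & f Zi = Zi'] /\
      forall g : A -> B,
        [/\ is_alghom g, g u = u', g v = v', g Z = Z' & g Zi = Zi'] ->
        forall a, g a = f a.

Definition is_gt (t : C) (A : algType C) (u v Z Zi : A) (g : A -> A) : Prop :=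
  [/\ is_alghom g, g u = t *: u, g v = t^-1 *: v, g Z = Z & g Zi = Zi].

Definition is_linform (A : algType C) (T : A -> C) : Prop :=
  forall (c : C) (x y : A), T (c *: x + y) = c * T x + T y.

Definition is_twisted_trace (A : algType C) (g : A -> A) (T : A -> C) : Prop :=
  is_linform T /\ forall a b : A, T (a * b) = T (b * g a).

Definition weight_space (q : C) (A : algType C) (Z Zi : A) (i : int) : pred A :=
  fun a => Z * a * Zi == (q ^ (2 * i)) *: a.

End GWA.

(* Main.v *)
Require Import Defs.
From HB Require Import structures.
From mathcomp Require Import all_boot all_order all_algebra.
From mathcomp Require Import reals complex boolp zify ring.
Import Order.TTheory GRing.Theory Num.Theory.
Local Open Scope ring_scope.
Set Implicit Arguments. Unset Strict Implicit. Unset Printing Implicit Defensive.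

Module G1.

Section Basic.
Variable R : realType.
Local Notation C := R[i].
Variables (q : C) (l : int) (p : {poly C}) (A : algType C) (u v Z Zi : A).
Hypothesis q0 : q != 0.
Hypothesis rels : gwa_rels q l p u v Z Zi.

Definition Xo := q^-1 *: Z.
Definition Xio := q *: Zi.
Local Notation X := Xo.
Local Notation Xi := Xio.

Lemma ZZi : Z * Zi = 1. Proof. by case: rels => -[]. Qed.
Lemma ZiZ : Zi * Z = 1. Proof. by case: rels => -[]. Qed.

Lemma XXi : X * Xi = 1.
Proof. by rewrite /Xo /Xio -scalerAl -scalerAr scalerA mulVf // ZZi scale1r. Qed.
Lemma XiX : Xi * X = 1.
Proof. by rewrite /Xo /Xio -scalerAl -scalerAr scalerA mulfV // ZiZ scale1r. Qed.

Definition Xp (j : int) : A := powz X Xi j.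

Lemma Xp0 : Xp 0 = 1. Proof. by []. Qed.

Lemma Xp_S j : Xp (j + 1) = X * Xp j.
Proof.
case: j => [n|n].
  by rewrite /Xp -PoszD addn1 /= exprS.
case: n => [|n].
  by rewrite /Xp /= expr1 XXi.
have -> : Negz n.+1 + 1 = Negz n by rewrite !NegzE; lia.
by rewrite /Xp /= [Xi ^+ n.+2]exprS mulrA XXi mul1r.
Qed.

Lemma Xp_P j : Xp (j - 1) = Xi * Xp j.
Proof.
by rewrite -{2}(subrK 1 j) Xp_S mulrA XiX mul1r.
Qed.

Lemma comm_XXi : GRing.comm X Xi.
Proof. by rewrite /GRing.comm XXi XiX. Qed.

Lemma comm_XXp j : GRing.comm X (Xp j).
Proof.
case: j => n /=; first exact: commrX.
by apply: commrX; exact: comm_XXi.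
Qed.

Lemma comm_XiXp j : GRing.comm Xi (Xp j).
Proof.
case: j => n /=; last exact: commrX.
apply: commrX; apply/esym; exact: comm_XXi.
Qed.

Lemma Xp_add i j : Xp (i + j) = Xp i * Xp j.
Proof.
elim/int_rec: j => [|n IH|n IH].
- by rewrite addr0 Xp0 mulr1.
- have -> : (n.+1)%:Z = n%:Z + 1 by lia.
  by rewrite addrA !Xp_S IH !mulrA (comm_XXp i).
- have -> : (- (n.+1)%:Z) = - n%:Z - 1 by lia.
  by rewrite addrA !Xp_P IH !mulrA (comm_XiXp i).
Qed.


Lemma powz_scale (c : C) m : c != 0 ->
  powz (c *: X) (c^-1 *: Xi) m = c ^ m *: Xp m.
Proof.
move=> c0; case: m => n /=; first by rewrite exprZn.
by rewrite exprZn exprVn.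
Qed.

Definition lau_list (m : int) (r : {poly C}) : seq (int * C) :=
  [seq (m + k%:Z, r`_k) | k <- iota 0 (size r)].

Definition cscale (c : C) (s : seq (int * C)) : seq (int * C) :=
  [seq (x.1, x.2 * c ^ x.1) | x <- s].

Definition Lau (s : seq (int * C)) : A := \sum_(x <- s) x.2 *: Xp x.1.

Lemma Lau_nil : Lau [::] = 0. Proof. by rewrite /Lau big_nil. Qed.
Lemma Lau_cons x s : Lau (x :: s) = x.2 *: Xp x.1 + Lau s.
Proof. by rewrite /Lau big_cons. Qed.
Lemma Lau_cat s s' : Lau (s ++ s') = Lau s + Lau s'.
Proof. by rewrite /Lau big_cat. Qed.

Lemma lpeval_Lau_c (c : C) m r : c != 0 ->
  lpeval m r (c *: X) (c^-1 *: Xi) = Lau (cscale c (lau_list m r)).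
Proof.
move=> c0; rewrite /lpeval powz_scale // /peval /Lau /cscale /lau_list.
rewrite -map_comp big_map.
have -> : iota 0 (size r) = index_iota 0 (size r) by rewrite /index_iota subn0.
rewrite big_mkord.
rewrite mulr_sumr; apply: eq_bigr => k _ /=.
rewrite exprZn -!scalerAl -!scalerAr !scalerA.
have -> : X ^+ k = Xp k by [].
by rewrite -Xp_add expfzDr // mulrC (mulrC (c ^ m)) mulrA.
Qed.

Lemma cscale1 s : cscale 1 s = s.
Proof. by rewrite /cscale; elim: s => [|x s IH] //=; rewrite IH exp1rz mulr1 -surjective_pairing. Qed.

Lemma lpeval_Lau m r : lpeval m r X Xi = Lau (lau_list m r).
Proof.
by have := lpeval_Lau_c m r (oner_neq0 C); rewrite invr1 !scale1r cscale1.
Qed.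


Lemma Lau_scale a s : a *: Lau s = Lau [seq (x.1, a * x.2) | x <- s].
Proof.
rewrite /Lau big_map scaler_sumr; apply: eq_bigr => x _ /=; by rewrite scalerA.
Qed.

Definition lau_prod (s s' : seq (int * C)) : seq (int * C) :=
  [seq (x.1 + y.1, x.2 * y.2) | x <- s, y <- s'].

Lemma Lau_mul s s' : Lau s * Lau s' = Lau (lau_prod s s').
Proof.
rewrite /Lau /lau_prod big_allpairs_dep mulr_suml; apply: eq_bigr => x _.
rewrite mulr_sumr; apply: eq_bigr => y _ /=.
by rewrite -scalerAl -scalerAr scalerA Xp_add.
Qed.

Definition lam (i : int) : C := q ^ (2 * i).

Lemma lam_add i j : lam (i + j) = lam i * lam j.
Proof. by rewrite /lam mulrDr expfzDr. Qed.
Lemma lam0 : lam 0 = 1. Proof. by rewrite /lam mulr0 expr0z. Qed.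
Lemma lam1 : lam 1 = q ^+ 2. Proof. by rewrite /lam mulr1. Qed.
Lemma lamN1 : lam (-1) = q ^- 2. Proof. by rewrite /lam mulrN1 -exprnN. Qed.
Lemma lam_neq0 i : lam i != 0. Proof. by rewrite /lam expfz_neq0. Qed.

Definition wt (i : int) (a : A) := Z * a * Zi = lam i *: a.

Lemma wt_add i a b : wt i a -> wt i b -> wt i (a + b).
Proof. by rewrite /wt => ha hb; rewrite mulrDr mulrDl ha hb scalerDr. Qed.
Lemma wt_scale i c a : wt i a -> wt i (c *: a).
Proof. by rewrite /wt => ha; rewrite -scalerAr -scalerAl ha !scalerA mulrC. Qed.
Lemma wt0 i : wt i 0. Proof. by rewrite /wt mulr0 mul0r scaler0. Qed.
Lemma wt_mul i j a b : wt i a -> wt j b -> wt (i + j) (a * b).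
Proof.
rewrite /wt => ha hb.
have -> : Z * (a * b) * Zi = (Z * a * Zi) * (Z * b * Zi).
  by rewrite !mulrA -[Z * a * Zi * Z]mulrA ZiZ mulr1.
by rewrite ha hb -scalerAl -scalerAr scalerA lam_add.
Qed.
Lemma wt_sum (I : Type) (s : seq I) (F : I -> A) i :
  (forall x, wt i (F x)) -> wt i (\sum_(x <- s) F x).
Proof.
move=> h; elim: s => [|x s IH]; first by rewrite big_nil; apply: wt0.
by rewrite big_cons; apply: wt_add.
Qed.

Lemma wt_u : wt 1 u. Proof. by rewrite /wt lam1; case: rels. Qed.
Lemma wt_v : wt (-1) v. Proof. by rewrite /wt lamN1; case: rels. Qed.
Lemma wt_Z : wt 0 Z. Proof. by rewrite /wt lam0 scale1r -mulrA ZZi mulr1. Qed.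
Lemma wt_Zi : wt 0 Zi. Proof. by rewrite /wt lam0 scale1r ZZi mul1r. Qed.
Lemma wt_1 : wt 0 1. Proof. by rewrite /wt lam0 scale1r mulr1 ZZi. Qed.
Lemma wt_X : wt 0 X. Proof. exact/wt_scale/wt_Z. Qed.
Lemma wt_Xi : wt 0 Xi. Proof. exact/wt_scale/wt_Zi. Qed.
Lemma wt_exp i a n : wt i a -> wt (i * n%:Z) (a ^+ n).
Proof.
move=> ha; elim: n => [|n IH]; first by rewrite expr0 mulr0; apply: wt_1.
rewrite exprS; have -> : i * n.+1%:Z = i + i * n%:Z by lia.
exact: wt_mul.
Qed.
Lemma wt_Xp j : wt 0 (Xp j).
Proof.
case: j => n /=; have := wt_exp n wt_X; rewrite ?mul0r //.
by have := wt_exp n.+1 wt_Xi; rewrite mul0r.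
Qed.
Lemma wt_Lau s : wt 0 (Lau s).
Proof. by apply: wt_sum => x; apply/wt_scale/wt_Xp. Qed.

Definition U (i : int) : A :=
  match i with Posz k => u ^+ k | Negz k => v ^+ k.+1 end.

Lemma wt_U i : wt i (U i).
Proof.
case: i => n /=; first by have := wt_exp n wt_u; rewrite mul1r.
by have := wt_exp n.+1 wt_v; rewrite NegzE; congr wt; lia.
Qed.

Lemma U_neg (k : nat) : U (- k%:Z) = v ^+ k.
Proof. by case: k => [|k] //=; rewrite -NegzE. Qed.


Lemma wt_commZ i a : wt i a -> Z * a = lam i *: (a * Z).
Proof. by rewrite /wt => ha; rewrite -[Z * a]mulr1 -ZiZ mulrA ha -scalerAl. Qed.

Lemma wt_commX i a : wt i a -> X * a = lam i *: (a * X).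
Proof.
move=> ha; rewrite /Xo -scalerAl (wt_commZ ha) -scalerAr.
by rewrite !scalerA mulrC.
Qed.

Lemma wt_commZi i a : wt i a -> Zi * a = (lam i)^-1 *: (a * Zi).
Proof.
rewrite /wt => ha.
have -> : a * Zi = Zi * (Z * a * Zi) by rewrite !mulrA ZiZ mul1r.
by rewrite ha -scalerAr scalerA mulVf ?lam_neq0 // scale1r.
Qed.

Lemma wt_commXi i a : wt i a -> Xi * a = (lam i)^-1 *: (a * Xi).
Proof.
move=> ha; rewrite /Xio -scalerAl (wt_commZi ha) -scalerAr.
by rewrite !scalerA mulrC.
Qed.

Lemma Xp_comm i a j : wt i a -> Xp j * a = lam i ^ j *: (a * Xp j).
Proof.
move=> ha; elim/int_rec: j => [|n IH|n IH].
- by rewrite Xp0 expr0z mul1r mulr1 scale1r.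
- have -> : (n.+1)%:Z = n%:Z + 1 by lia.
  rewrite Xp_S -mulrA IH -scalerAr mulrA (wt_commX ha) -scalerAl scalerA.
  by rewrite expfzDr ?lam_neq0 // expr1z mulrC -mulrA.
- have -> : (- (n.+1)%:Z) = - n%:Z - 1 by lia.
  rewrite Xp_P -mulrA IH -scalerAr mulrA (wt_commXi ha) -scalerAl scalerA.
  by rewrite expfzDr ?lam_neq0 // exprN1 mulrC -mulrA.
Qed.

Lemma Lau_comm i a s : wt i a -> Lau s * a = a * Lau (cscale (lam i) s).
Proof.
move=> ha; rewrite /Lau /cscale big_map mulr_suml mulr_sumr.
apply: eq_bigr => x _ /=.
by rewrite -scalerAl (Xp_comm _ ha) -scalerAr scalerA mulrC.
Qed.

Lemma uv_Lau : u * v = Lau (lau_list l p).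
Proof. by case: rels => _ _ _ -> _; rewrite lpeval_Lau. Qed.

Lemma qZ_X : q *: Z = lam 1 *: X.
Proof. by rewrite lam1 /Xo scalerA expr2 -mulrA mulfV // mulr1. Qed.
Lemma qZi_Xi : q^-1 *: Zi = (lam 1)^-1 *: Xi.
Proof. by rewrite lam1 /Xio scalerA expr2 invfM -mulrA mulVf // mulr1. Qed.

Lemma vu_Lau : v * u = Lau (cscale (lam 1) (lau_list l p)).
Proof.
by case: rels => _ _ _ _ ->; rewrite qZ_X qZi_Xi lpeval_Lau_c ?lam_neq0.
Qed.

Lemma X_Lau : X = Lau [:: (1, 1)].
Proof. by rewrite Lau_cons Lau_nil addr0 scale1r /Xp /= expr1. Qed.
Lemma Xi_Lau : Xi = Lau [:: (-1, 1)].
Proof. by rewrite Lau_cons Lau_nil addr0 scale1r /Xp /= expr1. Qed.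
Lemma one_Lau : 1 = Lau [:: (0, 1)].
Proof. by rewrite Lau_cons Lau_nil addr0 scale1r Xp0. Qed.

Definition Span (a : A) := exists L : seq (int * seq (int * C)),
  a = \sum_(x <- L) U x.1 * Lau x.2.

Lemma Span_term i s : Span (U i * Lau s).
Proof. by exists [:: (i, s)]; rewrite big_seq1. Qed.

Lemma Span0 : Span 0.
Proof. by exists [::]; rewrite big_nil. Qed.

Lemma Span_add a b : Span a -> Span b -> Span (a + b).
Proof. by move=> [L ->] [L' ->]; exists (L ++ L'); rewrite big_cat. Qed.

Lemma Span_sum (I : Type) (s : seq I) (F : I -> A) :
  (forall x, Span (F x)) -> Span (\sum_(x <- s) F x).
Proof.
move=> h; elim: s => [|x s IH]; first by rewrite big_nil; apply: Span0.
by rewrite big_cons; apply: Span_add.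
Qed.

Lemma Span_scale c a : Span a -> Span (c *: a).
Proof.
move=> [L ->]; rewrite scaler_sumr; apply: Span_sum => x.
by rewrite scalerAr Lau_scale; apply: Span_term.
Qed.

Lemma Span1 : Span 1.
Proof. by rewrite one_Lau -[Lau _]mul1r; apply: (Span_term 0). Qed.

Lemma Span_Lau s a : Span a -> Span (Lau s * a).
Proof.
move=> [L ->]; rewrite mulr_sumr; apply: Span_sum => x.
by rewrite mulrA (Lau_comm _ (wt_U x.1)) -mulrA Lau_mul; apply: Span_term.
Qed.

Lemma Span_X a : Span a -> Span (X * a).
Proof. by rewrite X_Lau; apply: Span_Lau. Qed.
Lemma Span_Xi a : Span a -> Span (Xi * a).
Proof. by rewrite Xi_Lau; apply: Span_Lau. Qed.
Lemma Span_Z a : Span a -> Span (Z * a).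
Proof.
move=> h; have -> : Z = q *: X by rewrite /Xo scalerA mulfV // scale1r.
by rewrite -scalerAl; apply/Span_scale/Span_X.
Qed.
Lemma Span_Zi a : Span a -> Span (Zi * a).
Proof.
move=> h; have -> : Zi = q^-1 *: Xi by rewrite /Xio scalerA mulVf // scale1r.
by rewrite -scalerAl; apply/Span_scale/Span_Xi.
Qed.

Lemma Span_u a : Span a -> Span (u * a).
Proof.
move=> [L ->]; rewrite mulr_sumr; apply: Span_sum => -[[k|k] s] /=.
  by rewrite mulrA -exprS; apply: (Span_term k.+1).
rewrite exprS !mulrA uv_Lau -U_neg (Lau_comm _ (wt_U (- k%:Z))) -mulrA Lau_mul.
by apply: Span_term.
Qed.

Lemma Span_v a : Span a -> Span (v * a).
Proof.
move=> [L ->]; rewrite mulr_sumr; apply: Span_sum => -[[[|k]|k] s] /=.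
- by rewrite expr0 mul1r; exact: (Span_term (Negz 0)).
- rewrite exprS !mulrA vu_Lau.
  have -> : u ^+ k = U k by [].
  by rewrite (Lau_comm _ (wt_U k)) -mulrA Lau_mul; apply: Span_term.
- by rewrite mulrA -exprS; apply: (Span_term (Negz k.+1)).
Qed.

End Basic.

End G1.
Import G1.

Module G2.

Section Hom.
Variable R : realType.
Local Notation C := R[i].
Variables (A B : algType C) (f : A -> B).
Hypothesis hf : is_alghom f.
Let lin : is_linmap f. Proof. by move: hf; rewrite /is_alghom => -[]. Qed.
Let mulf x y : f (x * y) = f x * f y. Proof. by move: hf; rewrite /is_alghom => -[]. Qed.
Let onef : f 1 = 1. Proof. by move: hf; rewrite /is_alghom => -[]. Qed.

Lemma hom0 : f 0 = 0.
Proof.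
have h := lin 1 0 0; rewrite !scale1r !addr0 in h.
by apply: (addrI (f 0)); rewrite addr0 -h.
Qed.
Lemma homD x y : f (x + y) = f x + f y.
Proof. by have := lin 1 x y; rewrite !scale1r. Qed.
Lemma homZ c x : f (c *: x) = c *: f x.
Proof. by rewrite -[c *: x]addr0 lin hom0 addr0. Qed.
Lemma homM x y : f (x * y) = f x * f y.
Proof. exact: mulf. Qed.
Lemma hom1 : f 1 = 1.
Proof. exact: onef. Qed.
Lemma homN x : f (- x) = - f x.
Proof. by rewrite -scaleN1r homZ scaleN1r. Qed.
Lemma homB x y : f (x - y) = f x - f y.
Proof. by rewrite homD homN. Qed.
Lemma hom_sum (I : Type) (s : seq I) (F : I -> A) :
  f (\sum_(x <- s) F x) = \sum_(x <- s) f (F x).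
Proof.
elim: s => [|x s IH]; first by rewrite !big_nil hom0.
by rewrite !big_cons homD IH.
Qed.
Lemma homX x n : f (x ^+ n) = f x ^+ n.
Proof.
elim: n => [|n IH]; first by rewrite !expr0 hom1.
by rewrite !exprS homM IH.
Qed.
Lemma hom_powz x xi m : f (powz x xi m) = powz (f x) (f xi) m.
Proof. by case: m => n /=; rewrite homX. Qed.
Lemma hom_peval r x : f (peval r x) = peval r (f x).
Proof.
rewrite /peval; have -> := @hom_sum _ (index_enum _) (fun k : 'I_(size r) => r`_k *: x ^+ k).
by apply: eq_bigr => k _; rewrite homZ homX.
Qed.
Lemma hom_lpeval m r x xi : f (lpeval m r x xi) = lpeval m r (f x) (f xi).
Proof. by rewrite /lpeval homM hom_powz hom_peval. Qed.

End Hom.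

Lemma alghom_id (R : realType) (A : algType R[i]) : is_alghom (@id A).
Proof. by split. Qed.

Lemma alghom_comp (R : realType) (A B D : algType R[i]) (f : A -> B) (g : B -> D) :
  is_alghom f -> is_alghom g -> is_alghom (g \o f).
Proof.
move=> hf hg; split => [c x y|/=|x y /=].
- by rewrite /= (homD hf) (homZ hf) (homD hg) (homZ hg).
- by rewrite (hom1 hf) (hom1 hg).
- by rewrite (homM hf) (homM hg).
Qed.

Section Ind.
Variable R : realType.
Local Notation C := R[i].
Variables (q : C) (l : int) (p : {poly C}) (A : algType C) (u v Z Zi : A).
Hypothesis gwa : is_gwa q l p u v Z Zi.
Variable M : A -> Prop.
Hypothesis M1 : M 1.
Hypothesis Madd : forall a b, M a -> M b -> M (a + b).
Hypothesis Mscale : forall (c : C) a, M a -> M (c *: a).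
Hypothesis Mmul : forall a b, M a -> M b -> M (a * b).
Hypotheses (Mu : M u) (Mv : M v) (MZ : M Z) (MZi : M Zi).
Hypothesis nt : (1 : A) != 0.

Let M0 : M 0. Proof. by rewrite -(scale0r 1); apply: Mscale. Qed.
Let Mopp a : M a -> M (- a). Proof. by move=> h; rewrite -scaleN1r; apply: Mscale. Qed.

Record sub := Sub { sval : A; sP : M sval }.

HB.instance Definition _ := gen_eqMixin sub.
HB.instance Definition _ := gen_choiceMixin sub.

Lemma sub_eq (x y : sub) : sval x = sval y -> x = y.
Proof.
case: x => x hx; case: y => y hy /= exy; subst y.
by rewrite (Prop_irrelevance hx hy).
Qed.

Definition szero := Sub M0.
Definition sopp (x : sub) := Sub (Mopp (sP x)).
Definition sadd (x y : sub) := Sub (Madd (sP x) (sP y)).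
Definition sone := Sub M1.
Definition smul (x y : sub) := Sub (Mmul (sP x) (sP y)).
Definition sscale (c : C) (x : sub) := Sub (Mscale c (sP x)).

Lemma saddA : associative sadd. Proof. by move=> x y z; apply: sub_eq; rewrite /= addrA. Qed.
Lemma saddC : commutative sadd. Proof. by move=> x y; apply: sub_eq; rewrite /= addrC. Qed.
Lemma sadd0 : left_id szero sadd. Proof. by move=> x; apply: sub_eq; rewrite /= add0r. Qed.
Lemma saddN : left_inverse szero sopp sadd.
Proof. by move=> x; apply: sub_eq; rewrite /= addNr. Qed.

HB.instance Definition _ := GRing.isZmodule.Build sub saddA saddC sadd0 saddN.

Lemma smulA : associative smul. Proof. by move=> x y z; apply: sub_eq; rewrite /= mulrA. Qed.
Lemma smul1 : left_id sone smul. Proof. by move=> x; apply: sub_eq; rewrite /= mul1r. Qed.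
Lemma smulr1 : right_id sone smul. Proof. by move=> x; apply: sub_eq; rewrite /= mulr1. Qed.
Lemma smulDl : left_distributive smul (@GRing.add sub).
Proof. by move=> x y z; apply: sub_eq; rewrite /= mulrDl. Qed.
Lemma smulDr : right_distributive smul (@GRing.add sub).
Proof. by move=> x y z; apply: sub_eq; rewrite /= mulrDr. Qed.
Lemma sone_neq0 : sone != 0.
Proof. by apply/eqP => /(congr1 sval) /= /eqP; rewrite (negPf nt). Qed.

HB.instance Definition _ := GRing.Zmodule_isNzRing.Build sub smulA smul1 smulr1 smulDl smulDr sone_neq0.

Lemma sscaleA a b x : sscale a (sscale b x) = sscale (a * b) x.
Proof. by apply: sub_eq; rewrite /= scalerA. Qed.
Lemma sscale1 : left_id 1 sscale. Proof. by move=> x; apply: sub_eq; rewrite /= scale1r. Qed.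
Lemma sscaleDr : right_distributive sscale (@GRing.add sub).
Proof. by move=> a x y; apply: sub_eq; rewrite /= scalerDr. Qed.
Lemma sscaleDl x : {morph sscale^~ x : a b / a + b}.
Proof. by move=> a b; apply: sub_eq; rewrite /= scalerDl. Qed.

HB.instance Definition _ := GRing.Zmodule_isLmodule.Build C sub sscaleA sscale1 sscaleDr sscaleDl.

Lemma sscaleAl a (x y : sub) : a *: (x * y) = (a *: x) * y.
Proof. by apply: sub_eq; rewrite /= scalerAl. Qed.
HB.instance Definition _ := GRing.Lmodule_isLalgebra.Build C sub sscaleAl.
Lemma sscaleAr a (x y : sub) : a *: (x * y) = x * (a *: y).
Proof. by apply: sub_eq; rewrite /= scalerAr. Qed.
HB.instance Definition _ := GRing.Lalgebra_isAlgebra.Build C sub sscaleAr.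

Lemma sval_hom : is_alghom (sval : sub -> A).
Proof. by split. Qed.

Lemma gwa_ind_nt a : M a.
Proof.
have rels : gwa_rels q l p (Sub Mu) (Sub Mv) (Sub MZ) (Sub MZi).
  case: gwa => -[[h1 h2] h3 h4 h5 h6] _.
  split; first split.
  - by apply: sub_eq; rewrite (homM sval_hom) /= h1.
  - by apply: sub_eq; rewrite (homM sval_hom) /= h2.
  - by apply: sub_eq; rewrite !(homM sval_hom) (homZ sval_hom) /= h3.
  - by apply: sub_eq; rewrite !(homM sval_hom) (homZ sval_hom) /= h4.
  - apply: sub_eq; rewrite (homM sval_hom) (hom_lpeval sval_hom).
    by rewrite !(homZ sval_hom) /= h5.
  - apply: sub_eq; rewrite (homM sval_hom) (hom_lpeval sval_hom).
    by rewrite !(homZ sval_hom) /= h6.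
move: gwa; rewrite /is_gwa => -[rA univ].
have [f [[hf fu fv fZ fZi] _]] := univ _ _ _ _ _ rels.
have [f0 [_ uniq0]] := univ _ _ _ _ _ rA.
have hid : [/\ is_alghom (@id A), id u = u, id v = v, id Z = Z & id Zi = Zi].
  by split => //; exact: alghom_id.
have hcomp : [/\ is_alghom (sval \o f), (sval \o f) u = u, (sval \o f) v = v,
   (sval \o f) Z = Z & (sval \o f) Zi = Zi].
  split; first exact: alghom_comp hf sval_hom.
  - by rewrite /= fu.
  - by rewrite /= fv.
  - by rewrite /= fZ.
  - by rewrite /= fZi.
have E1 := uniq0 _ hcomp a; have E2 := uniq0 _ hid a.
rewrite /= in E1 E2; rewrite E2 -E1; exact: sP.
Qed.

End Ind.

Lemma gwa_ind (R : realType) (q : R[i]) (l : int) (p : {poly R[i]}) (A : algType R[i])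
  (u v Z Zi : A) : is_gwa q l p u v Z Zi ->
  forall M : A -> Prop, M 1 ->
  (forall a b, M a -> M b -> M (a + b)) ->
  (forall (c : R[i]) a, M a -> M (c *: a)) ->
  (forall a b, M a -> M b -> M (a * b)) ->
  M u -> M v -> M Z -> M Zi -> forall a, M a.
Proof.
move=> gwa M M1 Madd Mscale Mmul Mu Mv MZ MZi a.
case: (eqVneq (1 : A) 0) => [e|nt]; last exact: (gwa_ind_nt gwa).
have -> : a = 0 *: 1 by rewrite scale0r -[a]mulr1 e mulr0.
exact: Mscale.
Qed.

Lemma Span_all (R : realType) (q : R[i]) (l : int) (p : {poly R[i]}) (A : algType R[i])
  (u v Z Zi : A) : q != 0 -> is_gwa q l p u v Z Zi -> forall a, Span q u v Z Zi a.
Proof.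
move=> q0 gwa.
have rels : gwa_rels q l p u v Z Zi by case: gwa.
pose M a := forall b, Span q u v Z Zi b -> Span q u v Z Zi (a * b).
suff hM : forall a, M a.
  by move=> a; rewrite -[a]mulr1; apply: hM; apply: Span1.
apply: (gwa_ind gwa).
- by move=> b hb; rewrite mul1r.
- by move=> a a' ha ha' b hb; rewrite mulrDl; apply: Span_add; [apply: ha|apply: ha'].
- by move=> c a ha b hb; rewrite -scalerAl; apply: Span_scale; apply: ha.
- by move=> a a' ha ha' b hb; rewrite -mulrA; apply: ha; apply: ha'.
- by move=> b hb; apply: (Span_u q0 rels).
- by move=> b hb; apply: (Span_v q0 rels).
- by move=> b hb; apply: (Span_Z q0 rels).
- by move=> b hb; apply: (Span_Zi q0 rels).
Qed.

End G2.
Import G2.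

Module G3.

Lemma inwsE (R : realType) (q : R[i]) (A : algType R[i]) (Z Zi : A) i a :
  (a \in weight_space q Z Zi i) = (Z * a * Zi == q ^ (2 * i) *: a).
Proof. by []. Qed.

Lemma lam_eq1 (R : realType) (q : R[i]) (i : int) :
  0 < `|q| < 1 -> q ^ (2 * i) = 1 -> i = 0.
Proof.
move=> /andP[q0 q1].
have key : forall n : nat, q ^+ n = 1 -> n = 0%N.
  move=> n e; case: n e => [//|n] e.
  have : `|q| ^+ n.+1 < 1 by rewrite exprn_ilt1 // ltW.
  by rewrite -normrX e normr1 ltxx.
have qn0 : q != 0 by rewrite -normr_gt0.
case: i => n.
  have -> : 2 * n%:Z = (2 * n)%N by lia.
  by move=> /key /eqP; rewrite muln_eq0 /= => /eqP ->.
have -> : 2 * Negz n = - (2 * n.+1)%N%:Z by rewrite NegzE; lia.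
rewrite -exprnN => e.
have e' : q ^+ (2 * n.+1) = 1 by rewrite -[q ^+ _]invrK e invr1.
by move: (key _ e') => /eqP; rewrite muln_eq0.
Qed.

Section Trace.
Variable R : realType.
Local Notation C := R[i].
Variables (q : C) (l : int) (p : {poly C}) (A : algType C) (u v Z Zi : A) (t : C) (g : A -> A).
Hypothesis hq : 0 < `|q| < 1.
Hypothesis gwa : is_gwa q l p u v Z Zi.
Hypothesis t0 : t != 0.
Hypothesis hg : is_gt t u v Z Zi g.

Let q0 : q != 0.
Proof. by case/andP: hq; rewrite normr_gt0. Qed.
Let rels : gwa_rels q l p u v Z Zi.
Proof. by case: gwa. Qed.
Let ghom : is_alghom g. Proof. by case: hg. Qed.
Let gu : g u = t *: u. Proof. by case: hg. Qed.
Let gv : g v = t^-1 *: v. Proof. by case: hg. Qed.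
Let gZ : g Z = Z. Proof. by case: hg. Qed.
Let gZi : g Zi = Zi. Proof. by case: hg. Qed.

Local Notation X := (Xo q Z).
Local Notation Xi := (Xio q Zi).
Local Notation Lau := (Lau q Z Zi).
Local Notation Xp := (Xp q Z Zi).
Local Notation wt := (wt q Z Zi).
Local Notation lam := (lam q).
Local Notation U := (U u v).

Section Lin.
Variable T : A -> C.
Hypothesis hT : is_linform T.
Lemma T0 : T 0 = 0.
Proof.
have h := hT 1 0 0; rewrite scale1r !addr0 mul1r in h.
by apply: (addrI (T 0)); rewrite addr0 -h.
Qed.
Lemma TD x y : T (x + y) = T x + T y.
Proof. by have := hT 1 x y; rewrite scale1r mul1r. Qed.
Lemma TZ c x : T (c *: x) = c * T x.
Proof. by rewrite -[c *: x]addr0 hT T0 addr0. Qed.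
Lemma TN x : T (- x) = - T x.
Proof. by rewrite -scaleN1r TZ mulN1r. Qed.
Lemma TB x y : T (x - y) = T x - T y.
Proof. by rewrite TD TN. Qed.
Lemma Tsum (I : Type) (s : seq I) (F : I -> A) :
  T (\sum_(x <- s) F x) = \sum_(x <- s) T (F x).
Proof.
elim: s => [|x s IH]; first by rewrite !big_nil T0.
by rewrite !big_cons TD IH.
Qed.
End Lin.

Lemma agree_basis (F1 F2 : A -> C) : is_linform F1 -> is_linform F2 ->
  (forall i j, F1 (U i * Xp j) = F2 (U i * Xp j)) -> forall a, F1 a = F2 a.
Proof.
move=> h1 h2 h a; have [L ->] := Span_all q0 gwa a.
rewrite (Tsum h1) (Tsum h2); apply: eq_bigr => x _.
rewrite /G1.Lau !mulr_sumr (Tsum h1) (Tsum h2); apply: eq_bigr => y _.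
by rewrite -!scalerAr (TZ h1) (TZ h2) h.
Qed.

Lemma wtUXp i j : wt i (U i * Xp j).
Proof. by rewrite -{1}(addr0 i); exact: (wt_mul q0 rels (wt_U q0 rels i) (wt_Xp q0 rels j)). Qed.

Definition sP := lau_list l p.
Definition sPq := cscale (lam 1) (lau_list l p).

Lemma Lau_XpE j : Xp j = Lau [:: (j, 1)].
Proof. by rewrite Lau_cons Lau_nil addr0 scale1r. Qed.

Lemma lpeval1 j : lpeval j 1 X Xi = Xp j.
Proof.
rewrite (lpeval_Lau q0 rels) /lau_list size_poly1 /= coefC /= addr0.
by rewrite Lau_cons Lau_nil addr0 scale1r.
Qed.

Lemma lpeval1q j : lpeval j 1 (q *: Z) (q^-1 *: Zi) = lam 1 ^ j *: Xp j.
Proof.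
rewrite (qZ_X _ q0) (qZi_Xi _ q0) (lpeval_Lau_c q0 rels) ?lam_neq0 //.
rewrite /lau_list size_poly1 /= coefC /= addr0.
by rewrite Lau_cons Lau_nil addr0 mul1r.
Qed.


Lemma Lpu m r : lpeval m r X Xi * u = u * lpeval m r (q *: Z) (q^-1 *: Zi).
Proof.
rewrite (lpeval_Lau q0 rels) (qZ_X _ q0) (qZi_Xi _ q0) (lpeval_Lau_c q0 rels) ?lam_neq0 //.
by rewrite (Lau_comm q0 rels _ (wt_u rels)).
Qed.

Lemma uvE : lpeval l p (q^-1 *: Z) (q *: Zi) = u * v.
Proof. by case: rels. Qed.
Lemma vuE : lpeval l p (q *: Z) (q^-1 *: Zi) = v * u.
Proof. by case: rels. Qed.

Lemma wt_T (T : A -> C) i a : is_twisted_trace g T -> i != 0 -> wt i a -> T a = 0.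
Proof.
move=> [hT htr] i0 ha.
have e : T (Z * (a * Zi)) = T a.
  by rewrite htr gZ -mulrA (ZiZ rels) mulr1.
move: e; rewrite mulrA ha (TZ hT) => /eqP.
rewrite -subr_eq0 -{2}[T a]mul1r -mulrBl mulf_eq0 subr_eq0 => /orP[/eqP|/eqP //].
by move/(lam_eq1 hq) => /eqP; rewrite (negPf i0).
Qed.

Lemma trace_fwd (T : A -> C) : is_twisted_trace g T ->
  [/\ is_linform T,
      (forall (i : int) (a : A), i != 0 -> a \in weight_space q Z Zi i -> T a = 0)
    & forall (m : int) (r : {poly C}),
        T (lpeval l p (q^-1 *: Z) (q *: Zi) * lpeval m r (q^-1 *: Z) (q *: Zi)
           - t *: (lpeval l p (q *: Z) (q^-1 *: Zi)
                   * lpeval m r (q *: Z) (q^-1 *: Zi))) = 0].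
Proof.
move=> htr; have [hT htr'] := htr; split => //.
  by move=> i a i0; rewrite inwsE => /eqP ha; apply: (wt_T htr i0).
move=> m r; rewrite uvE vuE (TB hT) (TZ hT).
rewrite -mulrA htr' gu -scalerAr (TZ hT) -[_ * _ * u]mulrA Lpu mulrA.
by rewrite subrr.
Qed.


Lemma lin_mull (T : A -> C) a : is_linform T -> is_linform (fun b => T (a * b)).
Proof. by move=> hT c x y /=; rewrite mulrDr -scalerAr hT. Qed.
Lemma lin_mulr (T : A -> C) a : is_linform T -> is_linform (fun b => T (b * a)).
Proof. by move=> hT c x y /=; rewrite mulrDl -scalerAl hT. Qed.

Lemma trace_bwd (T : A -> C) : is_linform T ->
  (forall (i : int) (a : A), i != 0 -> a \in weight_space q Z Zi i -> T a = 0) ->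
  (forall (m : int) (r : {poly C}),
        T (lpeval l p (q^-1 *: Z) (q *: Zi) * lpeval m r (q^-1 *: Z) (q *: Zi)
           - t *: (lpeval l p (q *: Z) (q^-1 *: Zi)
                   * lpeval m r (q *: Z) (q^-1 *: Zi))) = 0) ->
  is_twisted_trace g T.
Proof.
move=> hT hw0 h30.
have hw : forall i a, i != 0 -> wt i a -> T a = 0.
  by move=> i a i0 ha; apply: (hw0 i) => //; rewrite inwsE ha.
have h3 : forall j, T (u * v * Xp j) = t * lam 1 ^ j * T (v * u * Xp j).
  move=> j; have := h30 j 1; rewrite uvE vuE lpeval1 lpeval1q.
  rewrite (TB hT) (TZ hT) -scalerAr (TZ hT) => /eqP; rewrite subr_eq0 => /eqP ->.
  by rewrite mulrA.
split => //.
pose M a := forall b, T (a * b) = T (b * g a).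
apply: (gwa_ind gwa (M := M)).
- by move=> b; rewrite (hom1 ghom) mul1r mulr1.
- move=> a a' ha ha' b; rewrite mulrDl (TD hT) ha ha' (homD ghom) mulrDr (TD hT).
  by [].
- by move=> c a ha b; rewrite -scalerAl (TZ hT) ha (homZ ghom) -scalerAr (TZ hT).
- by move=> a a' ha ha' b; rewrite -mulrA ha -mulrA ha' (homM ghom) mulrA.
- apply: agree_basis; [exact: lin_mull|exact: lin_mulr|] => i j /=.
  rewrite gu -scalerAr (TZ hT).
  case: (eqVneq i (-1)) => [->|ne].
    have -> : U (-1) = v by [].
    rewrite mulrA h3 -[v * _ * u]mulrA (Xp_comm q0 rels _ (wt_u rels)) -scalerAr (TZ hT).
    by rewrite mulrA [in RHS]mulrA.
  have w := wtUXp i j.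
  have ne' : 1 + i != 0 by apply: contra ne => /eqP e; apply/eqP; lia.
  rewrite (hw (1 + i) _ ne' (wt_mul q0 rels (wt_u rels) w)).
  by rewrite (hw (i + 1) _ _ (wt_mul q0 rels w (wt_u rels))) ?mulr0 // addrC.
- apply: agree_basis; [exact: lin_mull|exact: lin_mulr|] => i j /=.
  rewrite gv -scalerAr (TZ hT).
  case: (eqVneq i 1) => [->|ne].
    have -> : U 1 = u by [].
    rewrite -[u * _ * v]mulrA (Xp_comm q0 rels _ (wt_v rels)) -scalerAr (TZ hT).
    rewrite [u * (v * _)]mulrA h3 [v * (u * _)]mulrA.
    set x := T _.
    have hab : lam (-1) ^ j * lam 1 ^ j = 1.
      by rewrite -expfzMl lamN1 lam1 mulVf ?expf_neq0 // exp1rz.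
    have -> : t^-1 * (lam (-1) ^ j * (t * lam 1 ^ j * x)) =
      (t^-1 * t) * (lam (-1) ^ j * lam 1 ^ j) * x by ring.
    by rewrite hab mulVf // !mul1r.
  have w := wtUXp i j.
  have ne' : -1 + i != 0 by apply: contra ne => /eqP e; apply/eqP; lia.
  rewrite (hw (-1 + i) _ ne' (wt_mul q0 rels (wt_v rels) w)).
  by rewrite (hw (i + -1) _ _ (wt_mul q0 rels w (wt_v rels))) ?mulr0 // addrC.
- apply: agree_basis; [exact: lin_mull|exact: lin_mulr|] => i j /=.
  rewrite gZ (wt_commZ rels (wtUXp i j)) (TZ hT).
  case: (eqVneq i 0) => [->|ne]; first by rewrite lam0 mul1r.
  rewrite (hw i _ ne) ?mulr0 //.
  by rewrite -{1}(addr0 i); apply: (wt_mul q0 rels (wtUXp i j) (wt_Z rels)).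
- apply: agree_basis; [exact: lin_mull|exact: lin_mulr|] => i j /=.
  rewrite gZi (wt_commZi q0 rels (wtUXp i j)) (TZ hT).
  case: (eqVneq i 0) => [->|ne]; first by rewrite lam0 invr1 mul1r.
  rewrite (hw i _ ne) ?mulr0 //.
  by rewrite -{1}(addr0 i); apply: (wt_mul q0 rels (wtUXp i j) (wt_Zi rels)).
Qed.

End Trace.

End G3.
Import G3.

Module G4.

Section Endo.
Variable R : realType.
Local Notation C := R[i].
Local Notation V := (int -> C).

Record endo := Endo {
  ap :> V -> V;
  apL : forall (c : C) (x y : V), ap (fun k => c * x k + y k) = fun k => c * ap x k + ap y k }.

HB.instance Definition _ := gen_eqMixin endo.
HB.instance Definition _ := gen_choiceMixin endo.

Lemma endo_eq (e f : endo) : (forall x k, e x k = f x k) -> e = f.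
Proof.
case: e => e he; case: f => f hf /= h.
have ef : e = f by apply: funext => x; apply: funext => k; apply: h.
subst f; by rewrite (Prop_irrelevance he hf).
Qed.

Lemma ap0 (e : endo) : e (fun _ => 0) = fun _ => 0.
Proof.
have h := apL e 1 (fun _ => 0) (fun _ => 0).
have e0 : (fun k : int => 1 * (fun _ : int => 0 : C) k + (fun _ : int => 0 : C) k) = (fun _ => 0).
  by apply: funext => k; rewrite mulr0 addr0.
rewrite e0 in h; apply: funext => k; have := congr1 (fun F => F k) h.
by rewrite /= mul1r => hh; apply: (addrI (e (fun _ => 0) k)); rewrite addr0 -hh.
Qed.

Lemma apD (e : endo) (x y : V) : e (fun k => x k + y k) = fun k => e x k + e y k.
Proof.
have -> : (fun k => x k + y k) = (fun k => 1 * x k + y k).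
  by apply: funext => k; rewrite mul1r.
by rewrite apL; apply: funext => k; rewrite mul1r.
Qed.

Lemma apZ (e : endo) (c : C) (x : V) : e (fun k => c * x k) = fun k => c * e x k.
Proof.
have -> : (fun k => c * x k) = (fun k => c * x k + (fun _ => 0) k).
  by apply: funext => k; rewrite addr0.
by rewrite apL ap0; apply: funext => k; rewrite addr0.
Qed.

Definition ezero : endo.
Proof. by exists (fun _ _ => 0); move=> c x y; apply: funext => k; rewrite mulr0 addr0. Defined.
Definition eopp (e : endo) : endo.
Proof.
exists (fun x k => - e x k) => c x y; apply: funext => k.
by rewrite apL mulrN opprD.
Defined.
Definition eadd (e f : endo) : endo.
Proof.
exists (fun x k => e x k + f x k) => c x y; apply: funext => k.
by rewrite !apL mulrDr addrACA.
Defined.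
Definition eone : endo.
Proof. by exists (fun x => x). Defined.
Definition emul (e f : endo) : endo.
Proof. by exists (fun x => e (f x)) => c x y; rewrite apL apL. Defined.
Definition escale (a : C) (e : endo) : endo.
Proof.
exists (fun x k => a * e x k) => c x y; apply: funext => k.
by rewrite apL mulrDr mulrCA.
Defined.

Lemma eaddA : associative eadd.
Proof. by move=> e f g; apply: endo_eq => x k /=; rewrite addrA. Qed.
Lemma eaddC : commutative eadd.
Proof. by move=> e f; apply: endo_eq => x k /=; rewrite addrC. Qed.
Lemma eadd0 : left_id ezero eadd.
Proof. by move=> e; apply: endo_eq => x k /=; rewrite add0r. Qed.
Lemma eaddN : left_inverse ezero eopp eadd.
Proof. by move=> e; apply: endo_eq => x k /=; rewrite addNr. Qed.

HB.instance Definition _ := GRing.isZmodule.Build endo eaddA eaddC eadd0 eaddN.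

Lemma emulA : associative emul. Proof. by move=> e f g; apply: endo_eq. Qed.
Lemma emul1 : left_id eone emul. Proof. by move=> e; apply: endo_eq. Qed.
Lemma emulr1 : right_id eone emul. Proof. by move=> e; apply: endo_eq. Qed.
Lemma emulDl : left_distributive emul (@GRing.add endo).
Proof. by move=> e f g; apply: endo_eq. Qed.
Lemma emulDr : right_distributive emul (@GRing.add endo).
Proof. by move=> e f g; apply: endo_eq => x k /=; rewrite apD. Qed.
Lemma eone_neq0 : eone != 0.
Proof.
apply/eqP => /(congr1 (fun e : endo => e (fun _ => 1) 0)) /= /eqP.
by rewrite oner_eq0.
Qed.

HB.instance Definition _ := GRing.Zmodule_isNzRing.Build endo emulA emul1 emulr1 emulDl emulDr eone_neq0.

Lemma escaleA a b e : escale a (escale b e) = escale (a * b) e.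
Proof. by apply: endo_eq => x k /=; rewrite mulrA. Qed.
Lemma escale1 : left_id 1 escale. Proof. by move=> e; apply: endo_eq => x k /=; rewrite mul1r. Qed.
Lemma escaleDr : right_distributive escale (@GRing.add endo).
Proof. by move=> a e f; apply: endo_eq => x k /=; rewrite mulrDr. Qed.
Lemma escaleDl e : {morph escale^~ e : a b / a + b}.
Proof. by move=> a b; apply: endo_eq => x k /=; rewrite mulrDl. Qed.

HB.instance Definition _ := GRing.Zmodule_isLmodule.Build C endo escaleA escale1 escaleDr escaleDl.

Lemma escaleAl a (e f : endo) : a *: (e * f) = (a *: e) * f.
Proof. by apply: endo_eq. Qed.
HB.instance Definition _ := GRing.Lmodule_isLalgebra.Build C endo escaleAl.
Lemma escaleAr a (e f : endo) : a *: (e * f) = e * (a *: f).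
Proof. by apply: endo_eq => x k /=; rewrite apZ. Qed.
HB.instance Definition _ := GRing.Lalgebra_isAlgebra.Build C endo escaleAr.

End Endo.

Section Diag.
Variable R : realType.
Local Notation C := R[i].

Definition diag (d : int -> C) : endo R.
Proof.
exists (fun x k => d k * x k) => c x y; apply: funext => k.
by rewrite mulrDr mulrCA.
Defined.

Lemma diag_mul d e : diag d * diag e = diag (fun k => d k * e k).
Proof. by apply: endo_eq => x k /=; rewrite mulrA. Qed.
Lemma diag_add d e : diag d + diag e = diag (fun k => d k + e k).
Proof. by apply: endo_eq => x k /=; rewrite mulrDl. Qed.
Lemma diag_scale c d : c *: diag d = diag (fun k => c * d k).
Proof. by apply: endo_eq => x k /=; rewrite mulrA. Qed.
Lemma diag_one : 1 = diag (fun _ => 1).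
Proof. by apply: endo_eq => x k /=; rewrite mul1r. Qed.
Lemma diag_zero : 0 = diag (fun _ => 0).
Proof. by apply: endo_eq => x k /=; rewrite mul0r. Qed.
Lemma diag_exp d n : diag d ^+ n = diag (fun k => d k ^+ n).
Proof.
elim: n => [|n IH]; first by rewrite expr0 diag_one.
by rewrite exprS IH diag_mul; congr diag; apply: funext => k; rewrite exprS.
Qed.
Lemma diag_sum (I : Type) (s : seq I) (F : I -> int -> C) :
  \sum_(x <- s) diag (F x) = diag (fun k => \sum_(x <- s) F x k).
Proof.
elim: s => [|x s IH].
  by rewrite big_nil diag_zero; congr diag; apply: funext => k; rewrite big_nil.
by rewrite big_cons IH diag_add; congr diag; apply: funext => k; rewrite big_cons.
Qed.
Lemma diag_peval r d : peval r (diag d) = diag (fun k => r.[d k]).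
Proof.
rewrite /peval.
have -> : \sum_(k < size r) r`_k *: diag d ^+ k = \sum_(k < size r) diag (fun j => r`_k * d j ^+ k).
  by apply: eq_bigr => k _; rewrite diag_exp diag_scale.
rewrite diag_sum; congr diag; apply: funext => j.
by rewrite horner_coef.
Qed.
Lemma diag_powz d m : (forall k, d k != 0) ->
  powz (diag d) (diag (fun k => (d k)^-1)) m = diag (fun k => d k ^ m).
Proof.
move=> hd; case: m => n /=; rewrite diag_exp //.
congr diag; apply: funext => k; by rewrite exprVn.
Qed.
Lemma diag_lpeval d m r : (forall k, d k != 0) ->
  lpeval m r (diag d) (diag (fun k => (d k)^-1)) = diag (fun k => d k ^ m * r.[d k]).
Proof. by move=> hd; rewrite /lpeval diag_powz // diag_peval diag_mul. Qed.

End Diag.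

Section Model.
Variable R : realType.
Local Notation C := R[i].
Variables (q : C) (l : int) (p : {poly C}).
Hypothesis q0 : q != 0.

Definition PP (y : C) := y ^ l * p.[y].
Local Notation zz := (lam q).

Lemma zz_neq0 k : zz k != 0. Proof. exact: lam_neq0. Qed.

Definition Zop : endo R := diag zz.
Definition Ziop : endo R := diag (fun k => (zz k)^-1).
Definition uop : endo R.
Proof. by exists (fun x k => x (k - 1)). Defined.
Definition vop : endo R.
Proof.
exists (fun x k => PP (q * zz k) * x (k + 1)) => c x y; apply: funext => k.
by rewrite mulrDr mulrCA.
Defined.

Lemma zzS k : zz (k + 1) = zz k * q ^+ 2.
Proof. by rewrite lam_add // lam1. Qed.
Lemma zzP k : zz k = zz (k - 1) * q ^+ 2.
Proof. by rewrite -zzS subrK. Qed.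

Lemma model_rels : gwa_rels q l p uop vop Zop Ziop.
Proof.
split; first split.
- by rewrite /Zop /Ziop diag_mul diag_one; congr diag; apply: funext => k; rewrite mulfV ?zz_neq0.
- by rewrite /Zop /Ziop diag_mul diag_one; congr diag; apply: funext => k; rewrite mulVf ?zz_neq0.
- apply: endo_eq => x k /=; rewrite zzP.
  have := zz_neq0 (k - 1); set a := zz (k - 1) => a0.
  by field.
- apply: endo_eq => x k /=; rewrite zzS.
  have := zz_neq0 k; set a := zz k => a0.
  set b := PP _; set y := x _.
  rewrite invfM; have -> : a * (b * (a^-1 * (q ^+ 2)^-1 * y)) = (a * a^-1) * ((q ^+ 2)^-1 * (b * y)) by ring.
  by rewrite mulfV // mul1r.
- have -> : q^-1 *: Zop = diag (fun k => q^-1 * zz k) by rewrite diag_scale.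
  have -> : q *: Ziop = diag (fun k => (q^-1 * zz k)^-1).
    by rewrite diag_scale; congr diag; apply: funext => k; rewrite invfM invrK.
  rewrite diag_lpeval => [|k]; last by rewrite mulf_neq0 ?invr_eq0 ?zz_neq0.
  apply: endo_eq => x k /=; rewrite subrK.
  have -> : q * zz (k - 1) = q^-1 * zz k.
    by rewrite [zz k]zzP; field.
  by [].
- have -> : q *: Zop = diag (fun k => q * zz k) by rewrite diag_scale.
  have -> : q^-1 *: Ziop = diag (fun k => (q * zz k)^-1).
    by rewrite diag_scale; congr diag; apply: funext => k; rewrite invfM.
  rewrite diag_lpeval => [|k]; last by rewrite mulf_neq0 ?zz_neq0.
  by apply: endo_eq => x k /=; rewrite addrK.
Qed.

End Model.

Lemma Lau_eval0 (R : realType) (q : R[i]) (l : int) (p : {poly R[i]}) (A : algType R[i])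
  (u v Z Zi : A) : q != 0 -> is_gwa q l p u v Z Zi ->
  forall s, Lau q Z Zi s = 0 ->
  forall k : int, \sum_(x <- s) x.2 * (q^-1 * lam q k) ^ x.1 = 0.
Proof.
move=> q0 gwa s hs k.
move: gwa; rewrite /is_gwa => -[_ univ].
have [f [[hf _ _ fZ fZi] _]] := univ _ _ _ _ _ (model_rels l p q0).
have e1 : f (Xo q Z) = diag (fun k => q^-1 * lam q k).
  by rewrite /Xo (homZ hf) fZ /Zop diag_scale.
have e2 : f (Xio q Zi) = diag (fun k => (q^-1 * lam q k)^-1).
  by rewrite /Xio (homZ hf) fZi /Ziop diag_scale; congr diag; apply: funext => j; rewrite invfM invrK.
have : f (Lau q Z Zi s) = diag (fun k => \sum_(x <- s) x.2 * (q^-1 * lam q k) ^ x.1).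
  rewrite /Lau (hom_sum hf) -diag_sum; apply: eq_bigr => x _.
  rewrite (homZ hf) /Xp (hom_powz hf) e1 e2 diag_powz ?diag_scale //.
  by move=> j; rewrite mulf_neq0 ?invr_eq0 ?lam_neq0.
rewrite hs (hom0 hf) => /(congr1 (fun e : endo R => e (fun _ => 1) k)) /=.
by rewrite mulr1 => <-.
Qed.

End G4.
Import G4.

Module G5.

Lemma poly_inf_roots (F : idomainType) (Q : {poly F}) (y : nat -> F) :
  injective y -> (forall k, Q.[y k] = 0) -> Q = 0.
Proof.
move=> iy hr; apply/eqP; apply/negP => /negP Q0.
have H1 : all (root Q) [seq y k | k <- iota 0 (size Q)].
  by apply/allP => x /mapP[k _ ->]; apply/eqP; exact: hr.
have H2 : uniq [seq y k | k <- iota 0 (size Q)] by rewrite map_inj_uniq ?iota_uniq.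
by have := max_poly_roots Q0 H1 H2; rewrite size_map size_iota ltnn.
Qed.

Lemma laurent_zero (R : realType) (q : R[i]) (s : seq (int * R[i])) :
  0 < `|q| < 1 ->
  (forall k : int, \sum_(x <- s) x.2 * (q^-1 * lam q k) ^ x.1 = 0) ->
  forall c : int -> R[i], \sum_(x <- s) x.2 * c x.1 = 0.
Proof.
move=> hq hs c.
have q0 : q != 0 by case/andP: hq; rewrite normr_gt0.
pose y (k : nat) := q^-1 * lam q k%:Z.
have y0 k : y k != 0 by rewrite mulf_neq0 ?invr_eq0 ?lam_neq0.
have iy : injective y.
  move=> k k' /(mulfI (invr_neq0 q0)) e.
  have : lam q (k%:Z - k'%:Z) = 1.
    by rewrite /lam mulrBr expfzDr // -exprz_inv -/(lam q k) e exprz_inv -expfzDr // subrr expr0z.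
  by move/(lam_eq1 hq)/eqP; rewrite subr_eq0 => /eqP [].
pose mu : int := - \sum_(x <- s) `|x.1|%:Z.
have hmu x : x \in s -> mu <= x.1.
  move=> xs; rewrite /mu (big_rem x xs) /=.
  have : 0 <= \sum_(j <- rem x s) `|j.1|%:Z by apply: sumr_ge0.
  move: (\sum_(j <- rem x s) _) => S.
  case: x {xs} => [[n|n] a] /=; rewrite ?NegzE; lia.
pose e (x : int * R[i]) := `|x.1 - mu|%N.
have he x : x \in s -> x.1 = mu + (e x)%:Z.
  by move=> /hmu hx; rewrite /e gez0_abs ?subr_ge0 // addrCA subrr addr0.
pose Q : {poly R[i]} := \sum_(x <- s) x.2 *: 'X^(e x).
have Q0 : Q = 0.
  apply: (poly_inf_roots iy) => k.
  rewrite /Q horner_sum.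
  have -> : \sum_(x <- s) (x.2 *: 'X^(e x)).[y k] = y k ^ (- mu) * \sum_(x <- s) x.2 * y k ^ x.1.
    rewrite mulr_sumr big_seq_cond [RHS]big_seq_cond; apply: eq_bigr => x /andP[xs _].
    rewrite hornerZ hornerXn (he x xs) expfzDr //.
    have hab : y k ^ (- mu) * y k ^ mu = 1 by rewrite -expfzDr // addNr expr0z.
    set a := y k ^ (- mu) in hab *; set b := y k ^ mu in hab *.
    have -> : a * (x.2 * (b * y k ^ (e x)%:Z)) = (a * b) * (x.2 * y k ^ (e x)%:Z) by ring.
    by rewrite hab mul1r.
  by have := hs k; rewrite -/(y k) => ->; rewrite mulr0.
pose B := (\sum_(x <- s) e x).+1.
have heB x : x \in s -> (e x < B)%N.
  by move=> xs; rewrite /B ltnS (big_rem x xs) /= leq_addr.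
have : \sum_(i < B) Q`_i * c (mu + i%:Z) = 0.
  by rewrite Q0; apply: big1 => i _; rewrite coef0 mul0r.
rewrite /Q; under eq_bigr do rewrite coef_sum mulr_suml.
move=> H; apply: eq_trans H.
rewrite exchange_big /= big_seq [RHS]big_seq.
apply: eq_bigr => x xs.
rewrite (bigD1 (Ordinal (heB x xs))) //= coefZ coefXn eqxx mulr1.
rewrite big1 ?addr0 -?(he x xs) //.
move=> i /negbTE ne; rewrite coefZ coefXn.
suff -> : (i : nat) == e x = false by rewrite mulr0 mul0r.
by apply/negbTE; apply: contraFN ne => /eqP ei; apply/eqP; apply: val_inj.
Qed.

Section Core.
Variable R : realType.
Local Notation C := R[i].
Variables (q : C) (l : int) (p : {poly C}) (A : algType C) (u v Z Zi : A).
Hypothesis hq : 0 < `|q| < 1.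
Hypothesis gwa : is_gwa q l p u v Z Zi.

Let q0 : q != 0.
Proof. by case/andP: hq; rewrite normr_gt0. Qed.
Let rels : gwa_rels q l p u v Z Zi.
Proof. by case: gwa. Qed.

Local Notation Lau := (Lau q Z Zi).
Local Notation wt := (wt q Z Zi).
Local Notation lam := (lam q).
Local Notation U := (U u v).

Lemma lam_inj i j : lam i = lam j -> i = j.
Proof.
move=> e; have : lam (i - j) = 1.
  by rewrite lam_add // e -lam_add // subrr lam0.
by move/(lam_eq1 hq)/eqP; rewrite subr_eq0 => /eqP.
Qed.

Lemma conj_sum (I : Type) (s : seq I) (F : I -> A) :
  Z * (\sum_(x <- s) F x) * Zi = \sum_(x <- s) Z * F x * Zi.
Proof. by rewrite mulr_sumr mulr_suml. Qed.

Lemma eig_indep (L : seq (int * A)) i0 e0 : wt i0 e0 ->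
  (forall x, x \in L -> wt x.1 x.2 /\ x.1 != i0) ->
  e0 = \sum_(x <- L) x.2 -> e0 = 0.
Proof.
have [n] := ubnP (size L); elim: n L e0 => // n IH [|[i1 e1] L] e0 hsz h0 hL.
  by rewrite big_nil.
rewrite big_cons /= => E.
have [h1 ne1] := hL _ (mem_head _ _).
have hL' x : x \in L -> wt x.1 x.2 /\ x.1 != i0.
  by move=> xL; apply: hL; rewrite inE xL orbT.
pose L' := [seq (x.1, (lam x.1 - lam i1) *: x.2) | x <- L].
have key : (lam i0 - lam i1) *: e0 = \sum_(x <- L') x.2.
  rewrite /L' big_map /=.
  have c0 : Z * e0 * Zi = lam i0 *: e0 by [].
  have c1 : Z * e1 * Zi = lam i1 *: e1 by [].
  rewrite scalerBl -c0 E mulrDr mulrDl c1 conj_sum scalerDr scaler_sumr.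
  have -> : \sum_(x <- L) Z * x.2 * Zi = \sum_(x <- L) lam x.1 *: x.2.
    rewrite big_seq [RHS]big_seq; apply: eq_bigr => x xL.
    by have [hx _] := hL' x xL.
  rewrite opprD addrACA subrr add0r -sumrB.
  by apply: eq_bigr => x _; rewrite scalerBl.
have : (lam i0 - lam i1) *: e0 = 0.
  apply: (IH L' _ _ _ _ key).
    by rewrite /L' size_map; move: hsz => /=; rewrite ltnS.
    exact: wt_scale.
  move=> x /mapP[y yL ->] /=; have [hy ny] := hL' y yL.
  by split => //; apply: wt_scale.
move/eqP; rewrite scaler_eq0 subr_eq0 => /orP[/eqP /lam_inj e|/eqP //].
by move: ne1; rewrite e eqxx.
Qed.


Definition LauL (L : seq (int * seq (int * C))) := \sum_(x <- L) U x.1 * Lau x.2.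
Definition pairing (c : int -> C) (s : seq (int * C)) := \sum_(x <- s) x.2 * c x.1.
Definition pair0 (c : int -> C) (L : seq (int * seq (int * C))) :=
  \sum_(x <- L | x.1 == 0) pairing c x.2.

Lemma wt_opp i a : wt i a -> wt i (- a).
Proof. by move=> h; rewrite -scaleN1r; apply: wt_scale. Qed.

Lemma Lau_zero_pairing s c : Lau s = 0 -> pairing c s = 0.
Proof.
move=> h; apply: (laurent_zero hq).
exact: (Lau_eval0 q0 gwa h).
Qed.

Lemma core (L : seq (int * seq (int * C))) (K : seq (int * A)) c :
  (forall x, x \in K -> wt x.1 x.2 /\ x.1 != 0) ->
  LauL L = \sum_(x <- K) x.2 -> pair0 c L = 0.
Proof.
move=> hK E.
pose ss := [seq x.2 | x <- L & x.1 == 0].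
have e0E : \sum_(x <- L | x.1 == 0) U x.1 * Lau x.2 = Lau (flatten ss).
  rewrite /G1.Lau big_flatten /= /ss big_map big_filter.
  by apply: eq_bigr => x /eqP ->; rewrite mul1r.
have hsplit : LauL L = Lau (flatten ss) + \sum_(x <- L | x.1 != 0) U x.1 * Lau x.2.
  by rewrite /LauL (bigID (fun x => x.1 == 0)) /= e0E.
have e0z : Lau (flatten ss) = 0.
  pose K' := K ++ [seq (x.1, - (U x.1 * Lau x.2)) | x <- L & x.1 != 0].
  apply: (eig_indep (L := K') (i0 := 0)).
  - exact: (wt_Lau q0 rels).
  - move=> x; rewrite mem_cat => /orP[/hK //|/mapP[y]].
    rewrite mem_filter => /andP[ny _] -> /=; split => //.
    apply: wt_opp; rewrite -{1}(addr0 y.1).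
    exact: (wt_mul q0 rels (wt_U q0 rels y.1) (wt_Lau q0 rels _)).
  - rewrite /K' big_cat /= big_map big_filter sumrN -E hsplit.
    by rewrite addrK.
have := Lau_zero_pairing c e0z.
by rewrite /pairing big_flatten /= /ss big_map big_filter.
Qed.

End Core.

End G5.
Import G5.

Module G6.

Section Tc.
Variable R : realType.
Local Notation C := R[i].
Variables (q : C) (l : int) (p : {poly C}) (A : algType C) (u v Z Zi : A).
Hypothesis hq : 0 < `|q| < 1.
Hypothesis gwa : is_gwa q l p u v Z Zi.

Let q0 : q != 0.
Proof. by case/andP: hq; rewrite normr_gt0. Qed.
Let rels : gwa_rels q l p u v Z Zi.
Proof. by case: gwa. Qed.

Local Notation Lau := (Lau q Z Zi).
Local Notation Xp := (Xp q Z Zi).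
Local Notation wt := (wt q Z Zi).
Local Notation lam := (lam q).
Local Notation U := (U u v).
Local Notation LauL := (LauL q u v Z Zi).

Variable c : int -> C.

Definition Dec (a : A) (x : C) := exists L, a = LauL L /\ x = pair0 c L.

Definition Tc (a : A) : C :=
  match pselect (exists x, Dec a x) with
  | left H => proj1_sig (cid H)
  | right _ => 0
  end.

Definition sc (a : C) (s : seq (int * C)) := [seq (x.1, a * x.2) | x <- s].
Definition scL (a : C) (L : seq (int * seq (int * C))) := [seq (x.1, sc a x.2) | x <- L].

Lemma LauL_cat L L' : LauL (L ++ L') = LauL L + LauL L'.
Proof. by rewrite /G5.LauL big_cat. Qed.
Lemma pair0_cat L L' : pair0 c (L ++ L') = pair0 c L + pair0 c L'.
Proof. by rewrite /pair0 big_cat. Qed.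
Lemma LauL_sc a L : LauL (scL a L) = a *: LauL L.
Proof.
rewrite /G5.LauL /scL big_map scaler_sumr; apply: eq_bigr => x _ /=.
by rewrite scalerAr Lau_scale.
Qed.
Lemma pair0_sc a L : pair0 c (scL a L) = a * pair0 c L.
Proof.
rewrite /pair0 /scL big_map mulr_sumr; apply: eq_bigr => x _ /=.
rewrite /pairing /sc big_map mulr_sumr; apply: eq_bigr => y _ /=.
by rewrite mulrA.
Qed.

Lemma Dec_ex a : exists x, Dec a x.
Proof.
have [L ->] := Span_all q0 gwa a.
by exists (pair0 c L); exists L.
Qed.

Lemma Dec_uniq a x y : Dec a x -> Dec a y -> x = y.
Proof.
move=> [L [EL ->]] [L' [EL' ->]].
have : pair0 c (L ++ scL (-1) L') = 0.
  apply: (@core R q l p A u v Z Zi hq gwa _ [::]) => //.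
  by rewrite big_nil LauL_cat LauL_sc -EL -EL' scaleN1r subrr.
by rewrite pair0_cat pair0_sc mulN1r => /eqP; rewrite subr_eq0 => /eqP.
Qed.

Lemma Tc_spec a : Dec a (Tc a).
Proof.
rewrite /Tc; case: pselect => [H|]; first by case: (cid H).
by move=> /(_ (Dec_ex a)).
Qed.

Lemma Tc_dec a x : Dec a x -> Tc a = x.
Proof. by move=> h; apply: Dec_uniq h; apply: Tc_spec. Qed.

Lemma Tc_lin : is_linform Tc.
Proof.
move=> a x y.
have [L [EL eL]] := Tc_spec x; have [L' [EL' eL']] := Tc_spec y.
apply: Tc_dec; exists (scL a L ++ L'); split.
  by rewrite LauL_cat LauL_sc -EL -EL'.
by rewrite pair0_cat pair0_sc -eL -eL'.
Qed.

Lemma Tc_Lau s : Tc (Lau s) = pairing c s.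
Proof.
apply: Tc_dec; exists [:: (0, s)]; split.
  by rewrite /G5.LauL big_cons big_nil addr0 /= mul1r.
by rewrite /pair0 big_cons big_nil /= addr0.
Qed.

Lemma Tc_Xp j : Tc (Xp j) = c j.
Proof.
rewrite (Lau_XpE q Z Zi j) Tc_Lau /pairing big_seq1 /= mul1r.
by [].
Qed.

Lemma Tc_wt i a : i != 0 -> wt i a -> Tc a = 0.
Proof.
move=> i0 ha; have [L [EL eL]] := Tc_spec a.
rewrite eL; apply: (@core R q l p A u v Z Zi hq gwa L [:: (i, a)] c).
  by move=> x; rewrite inE => /eqP -> /=.
by rewrite big_seq1 -EL.
Qed.

End Tc.

Section Formula.
Variable R : realType.
Local Notation C := R[i].
Variables (q : C) (l : int) (p : {poly C}) (t : C).
Hypothesis q0 : q != 0.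
Local Notation lam := (lam q).

Definition Cexpr (c : int -> C) (s : int) :=
  \sum_(k <- iota 0 (size p)) p`_k * ((1 - t * lam 1 ^ (s + k%:Z)) * c (s + k%:Z)).
Definition Cond (c : int -> C) := forall s, Cexpr c s = 0.

Definition IIIval (c : int -> C) (m : int) (r : {poly C}) :=
  pairing c (lau_prod (lau_list l p) (lau_list m r))
  - t * pairing c (lau_prod (cscale (lam 1) (lau_list l p)) (cscale (lam 1) (lau_list m r))).

Lemma pairing_prod (c : int -> C) (s s' : seq (int * C)) :
  pairing c (lau_prod s s') = \sum_(x <- s) \sum_(y <- s') x.2 * y.2 * c (x.1 + y.1).
Proof. by rewrite /pairing /lau_prod big_allpairs_dep. Qed.

Lemma III_formula (c : int -> C) m r :
  IIIval c m r = \sum_(i <- iota 0 (size r)) r`_i * Cexpr c (l + m + i%:Z).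
Proof.
rewrite /IIIval !pairing_prod.
rewrite /cscale /lau_list.
rewrite -!map_comp.
rewrite !big_map mulr_sumr -sumrB.
under [RHS]eq_bigr do rewrite /Cexpr mulr_sumr.
rewrite [RHS]exchange_big /=; apply: eq_bigr => k _.
rewrite !big_map mulr_sumr -sumrB; apply: eq_bigr => i _ /=.
have e1 : l + m + i%:Z + k%:Z = l + k%:Z + (m + i%:Z) by lia.
rewrite e1 [lam 1 ^ (l + k%:Z + _)]expfzDr ?lam_neq0 //.
by ring.
Qed.

Lemma III_r1 (c : int -> C) m : IIIval c m 1 = Cexpr c (l + m).
Proof.
rewrite III_formula size_poly1 /= big_cons big_nil addr0 coefC /= mul1r.
by rewrite addr0.
Qed.

End Formula.

End G6.
Import G6.

Module G7.

Section Recurrence.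
Variable F : fieldType.
Variable p : {poly F}.
Variable N : nat.
Hypothesis sizeE : size p = N.+1.
Hypothesis p0 : p`_0 != 0.

Lemma pN0 : p`_N != 0.
Proof.
have : p != 0 by rewrite -size_poly_gt0 sizeE.
by rewrite -lead_coef_eq0 /lead_coef sizeE.
Qed.

Definition Rec (d : int -> F) :=
  forall s : int, \sum_(k <- iota 0 (size p)) p`_k * d (s + k%:Z) = 0.

Lemma rec_last d s : Rec d ->
  \sum_(k <- iota 0 N) p`_k * d (s + k%:Z) + p`_N * d (s + N%:Z) = 0.
Proof.
move=> /(_ s); rewrite sizeE -addn1 iotaD big_cat /= big_seq1.
by rewrite add0n.
Qed.

Lemma rec_first d s : Rec d ->
  p`_0 * d s + \sum_(k <- iota 1 N) p`_k * d (s + k%:Z) = 0.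
Proof.
by move=> /(_ s); rewrite sizeE /= big_cons addr0.
Qed.

Lemma rec_uniq d (b : int) : Rec d -> (forall i, (i < N)%N -> d (b + i%:Z) = 0) ->
  forall j, d j = 0.
Proof.
move=> hr h0.
have fwd : forall i : nat, d (b + i%:Z) = 0.
  elim/ltn_ind => i IH.
  case: (ltnP i N) => [/h0 //|iN].
  have := rec_last (b + (i - N)%:Z) hr.
  rewrite big_seq big1 => [|k]; last first.
    rewrite mem_iota add0n => /andP[_ kN].
    rewrite -addrA -PoszD IH ?mulr0 //; lia.
  rewrite add0r -addrA -PoszD subnK // => /eqP.
  by rewrite mulf_eq0 (negPf pN0) /= => /eqP.
have bwd : forall i : nat, d (b - 1 - i%:Z) = 0.
  elim/ltn_ind => i IH.
  have := rec_first (b - 1 - i%:Z) hr.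
  rewrite big_seq big1 => [|k]; last first.
    rewrite mem_iota => /andP[k1 kN].
    case: (leqP k i) => ki.
      have -> : b - 1 - i%:Z + k%:Z = b - 1 - (i - k)%N%:Z by lia.
      by rewrite IH ?mulr0 //; lia.
    have -> : b - 1 - i%:Z + k%:Z = b + (k - i.+1)%N%:Z by lia.
    by rewrite fwd mulr0.
  rewrite addr0 => /eqP; rewrite mulf_eq0 (negPf p0) /= => /eqP.
  by [].
move=> j; case: (lerP b j) => hj.
  by have -> : j = b + `|(j - b)%R|%N%:Z by lia.
by have -> : j = b - 1 - `|(b - 1 - j)%R|%N%:Z by lia.
Qed.


Section Exist.
Variable M : nat.
Hypothesis NM : N = M.+1.

Definition next (y : nat -> F) : F := - (\sum_(k <- iota 0 N) p`_k * y k) / p`_N.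
Definition prev (y : nat -> F) : F := - (\sum_(k <- iota 1 N) p`_k * y k.-1) / p`_0.
Definition Fs (y : nat -> F) : nat -> F :=
  fun i => if (i.+1 < N)%N then y i.+1 else if i.+1 == N then next y else y i.
Definition Gs (y : nat -> F) : nat -> F :=
  fun i => if i == 0%N then prev y else if (i < N)%N then y i.-1 else y i.

Lemma iota0N : iota 0 N = 0%N :: iota 1 M.
Proof. by rewrite NM. Qed.
Lemma iota1N : iota 1 N = iota 1 M ++ [:: M.+1].
Proof. by rewrite NM -(addn1 M) iotaD add1n addn1. Qed.

Lemma FG y : Fs (Gs y) = y.
Proof.
apply: funext => i; rewrite /Fs.
case: ifP => [iN|/negbT iN1].
  by rewrite /Gs /= iN.
case: ifP => [/eqP iN|/negbT iN].
  rewrite /next iota0N big_cons /Gs /= /prev.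
  have -> : \sum_(j <- iota 1 M) p`_j * (if j == 0%N then prev y else if (j < N)%N then y j.-1 else y j)
      = \sum_(j <- iota 1 M) p`_j * y j.-1.
    rewrite big_seq [RHS]big_seq; apply: eq_bigr => j.
    rewrite mem_iota => /andP[j1 jM].
    have -> : (j == 0%N) = false by case: j j1 {jM}.
    by have -> : (j < N)%N by rewrite NM; lia.
  rewrite iota1N big_cat big_seq1 /=.
  set S := \sum_(j <- iota 1 M) _.
  have iM : i = M by rewrite NM in iN; case: iN.
  subst i; have pN := pN0; rewrite NM in pN *.
  by field; rewrite pN p0.
rewrite /Gs; have -> : (i == 0%N) = false by apply/negbTE; rewrite NM in iN iN1 *; lia.
by have -> : (i < N)%N = false by apply/negbTE; rewrite NM in iN iN1 *; lia.
Qed.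

Lemma GF y : Gs (Fs y) = y.
Proof.
apply: funext => i; rewrite /Gs.
case: ifP => [/eqP ->|/negbT i0].
  rewrite /prev iota1N big_cat big_seq1 /=.
  have -> : \sum_(j <- iota 1 M) p`_j * Fs y j.-1 = \sum_(j <- iota 1 M) p`_j * y j.
    rewrite big_seq [RHS]big_seq; apply: eq_bigr => j.
    rewrite mem_iota => /andP[j1 jM].
    rewrite /Fs; have -> : (j.-1.+1 < N)%N by rewrite NM; lia.
    by rewrite prednK //; lia.
  rewrite /Fs; have -> : (M.+1 < N)%N = false by rewrite NM ltnn.
  rewrite NM eqxx /next iota0N big_cons.
  have pN := pN0; rewrite NM in pN *.
  by field; rewrite pN p0.
case: ifP => [iN|/negbT iN].
  rewrite /Fs; have -> : (i.-1.+1 < N)%N by rewrite prednK //; lia.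
  by rewrite prednK //; lia.
rewrite /Fs; have -> : (i.+1 < N)%N = false by apply/negbTE; lia.
by have -> : (i.+1 == N) = false by apply/negbTE; lia.
Qed.

Variable w : nat -> F.

Definition S (j : int) : nat -> F :=
  match j with Posz n => iter n Fs w | Negz n => iter n.+1 Gs w end.

Lemma S_succ j : S (j + 1) = Fs (S j).
Proof.
case: j => [n|[|n]].
- by rewrite -PoszD addn1 /=.
- by rewrite /= FG.
- have -> : Negz n.+1 + 1 = Negz n by rewrite !NegzE; lia.
  by rewrite [S (Negz n.+1)]/= FG.
Qed.

Lemma S_shift (k : nat) j : (k < N)%N -> S (j + k%:Z) 0%N = S j k.
Proof.
elim: k j => [|k IH] j hk; first by rewrite addr0.
have -> : j + k.+1%:Z = (j + 1) + k%:Z by lia.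
rewrite IH; last by lia.
by rewrite S_succ /Fs hk.
Qed.

Lemma rec_exists (b : int) : exists d, Rec d /\ forall i, (i < N)%N -> d (b + i%:Z) = w i.
Proof.
exists (fun j => S (j - b) 0%N); split.
  move=> s; rewrite sizeE -(addn1 N) iotaD big_cat big_seq1 /= add0n.
  rewrite big_seq.
  have -> : \sum_(i <- iota 0 N | i \in iota 0 N) p`_i * S (s + i%:Z - b) 0%N =
            \sum_(i <- iota 0 N | i \in iota 0 N) p`_i * S (s - b) i.
    apply: eq_bigr => k; rewrite mem_iota add0n => kN.
    by rewrite -(S_shift (s - b) kN); congr (_ * S _ _); lia.
  have -> : S (s + N%:Z - b) 0%N = next (S (s - b)).
    have -> : s + N%:Z - b = (s - b + 1) + M%:Z by rewrite NM; lia.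
    rewrite S_shift ?NM // S_succ /Fs NM ltnn eqxx.
    by [].
  rewrite -big_seq /next; have := pN0; set a := p`_N => a0.
  by field.
move=> i hi; have -> : b + i%:Z - b = 0 + i%:Z by lia.
by rewrite S_shift.
Qed.

End Exist.

End Recurrence.

End G7.
Import G7.

Module G8.

Section Main.
Variable R : realType.
Local Notation C := R[i].
Variables (q : C) (l : int) (p : {poly C}) (A : algType C) (u v Z Zi : A) (t : C) (g : A -> A).
Hypothesis hq : 0 < `|q| < 1.
Hypothesis p0 : p`_0 != 0.
Hypothesis hsz : (1 < size p)%N.
Hypothesis gwa : is_gwa q l p u v Z Zi.
Hypothesis t0 : t != 0.
Hypothesis hg : is_gt t u v Z Zi g.

Let q0 : q != 0.
Proof. by case/andP: hq; rewrite normr_gt0. Qed.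
Let rels : gwa_rels q l p u v Z Zi.
Proof. by case: gwa. Qed.

Local Notation Lau := (Lau q Z Zi).
Local Notation Xp := (Xp q Z Zi).
Local Notation wt := (wt q Z Zi).
Local Notation lam := (lam q).
Local Notation U := (U u v).

Definition IIIexpr (m : int) (r : {poly C}) : A :=
  lpeval l p (q^-1 *: Z) (q *: Zi) * lpeval m r (q^-1 *: Z) (q *: Zi)
  - t *: (lpeval l p (q *: Z) (q^-1 *: Zi) * lpeval m r (q *: Z) (q^-1 *: Zi)).

Lemma T_Lau (T : A -> C) s : is_linform T -> T (Lau s) = pairing (fun j => T (Xp j)) s.
Proof.
move=> hT; rewrite /G1.Lau (Tsum hT) /pairing; apply: eq_bigr => x _.
by rewrite (TZ hT).
Qed.

Lemma T_III (T : A -> C) m r : is_linform T ->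
  T (IIIexpr m r) = IIIval q l p t (fun j => T (Xp j)) m r.
Proof.
move=> hT; rewrite /IIIexpr.
have -> : lpeval l p (q^-1 *: Z) (q *: Zi) = lpeval l p (Xo q Z) (Xio q Zi) by [].
have -> : lpeval m r (q^-1 *: Z) (q *: Zi) = lpeval m r (Xo q Z) (Xio q Zi) by [].
rewrite (qZ_X _ q0) (qZi_Xi _ q0) !(lpeval_Lau_c q0 rels) ?lam_neq0 //.
rewrite !(lpeval_Lau q0 rels) !(Lau_mul q0 rels) (TB hT) (TZ hT) !(T_Lau _ hT).
by [].
Qed.


Definition den (j : int) : C := 1 - t * lam 1 ^ j.

Lemma lam1_exp j : lam 1 ^ j = lam j.
Proof. by rewrite /G1.lam exprz_exp mulr1. Qed.

Lemma den_uniq j j' : den j = 0 -> den j' = 0 -> j = j'.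
Proof.
rewrite /den => /eqP; rewrite subr_eq0 => /eqP e /eqP; rewrite subr_eq0 => /eqP e'.
apply: (lam_inj hq); rewrite -(lam1_exp j) -(lam1_exp j'); apply: (mulfI t0).
by rewrite -e -e'.
Qed.

Definition bb : int :=
  match pselect (exists j, den j = 0) with
  | left H => proj1_sig (cid H)
  | right _ => 0
  end.

Lemma den_bb j : den j = 0 -> j = bb.
Proof.
move=> hj; rewrite /bb; case: pselect => [H|nH]; last by case: nH; exists j.
by case: (cid H) => j' hj' /=; apply: den_uniq.
Qed.

Local Notation N := (size p).-1.
Lemma sizeE : size p = N.+1.
Proof. by rewrite prednK //; apply: leq_trans hsz. Qed.
Lemma NM : N = N.-1.+1.
Proof. by rewrite prednK //; rewrite -ltnS -sizeE. Qed.
Lemma N0 : (0 < N)%N.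
Proof. by rewrite NM. Qed.

Definition wk (k : 'I_N) (i : nat) : C := den (bb + i%:Z) * (i == k)%:R.

Definition dk (k : 'I_N) : int -> C :=
  proj1_sig (cid (rec_exists sizeE p0 NM (wk k) bb)).

Lemma dk_spec k : Rec p (dk k) /\ forall i, (i < N)%N -> dk k (bb + i%:Z) = wk k i.
Proof. by rewrite /dk; case: cid. Qed.

Definition ck (k : 'I_N) (j : int) : C :=
  if den j == 0 then (val k == 0%N)%:R else dk k j / den j.

Lemma ck_den k j : den j * ck k j = dk k j.
Proof.
rewrite /ck; case: ifP => [/eqP hj|/negbT hj]; last by rewrite mulrC divfK.
rewrite hj mul0r; have -> := den_bb hj.
have [_ hi] := dk_spec k; rewrite -[bb]addr0 (hi 0%N N0) /wk addr0.
by rewrite -(den_bb hj) hj mul0r.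
Qed.

Lemma ck_cond k : Cond q p t (ck k).
Proof.
move=> s; rewrite /Cexpr; have [hr _] := dk_spec k.
rewrite -[RHS](hr s); apply: eq_bigr => i _.
by rewrite -ck_den.
Qed.

Lemma ck_init (k : 'I_N) (i : nat) : (i < N)%N -> ck k (bb + i%:Z) = (i == k)%:R.
Proof.
move=> hi; rewrite /ck; case: ifP => [/eqP hj|/negbT hj].
  have := den_bb hj; rewrite -{2}[bb]addr0 => /addrI /eqP.
  by rewrite eqz_nat => /eqP ->; rewrite eq_sym.
have [_ hi'] := dk_spec k; rewrite hi' // /wk mulrC mulKf //.
Qed.

Lemma cond_uniq (c : int -> C) : Cond q p t c ->
  (forall i, (i < N)%N -> c (bb + i%:Z) = 0) -> forall j, c j = 0.
Proof.
move=> hc hi j.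
have hd : forall j, den j * c j = 0.
  apply: (rec_uniq sizeE p0 (b := bb)) => [s|i iN].
    by have := hc s.
  by rewrite hi // mulr0.
have := hd j => /eqP; rewrite mulf_eq0 => /orP[/eqP dj|/eqP //].
by rewrite (den_bb dj) -[bb]addr0 (hi 0%N N0).
Qed.


Definition Ts (k : 'I_N) : A -> C := Tc q u v Z Zi (ck k).

Lemma Ts_Xp k j : Ts k (Xp j) = ck k j.
Proof. exact: (Tc_Xp hq gwa). Qed.

Lemma Ts_trace k : is_twisted_trace g (Ts k).
Proof.
have hT := Tc_lin hq gwa (ck k).
apply: (trace_bwd hq gwa t0 hg hT).
  by move=> i a i0; rewrite inwsE => /eqP ha; exact: (Tc_wt hq gwa (ck k) i0 ha).
move=> m r; have := T_III m r hT; rewrite /IIIexpr => ->.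
have -> : (fun j => Tc q u v Z Zi (ck k) (Xp j)) = ck k.
  by apply: funext => j; exact: Ts_Xp.
rewrite (III_formula l p t q0) big1 // => i _.
by rewrite (ck_cond k) mulr0.
Qed.

Lemma trace_cond (T : A -> C) : is_twisted_trace g T -> Cond q p t (fun j => T (Xp j)).
Proof.
move=> htr s; have [hT _ h3] := trace_fwd hq gwa hg htr.
have := h3 (s - l) 1; have := T_III (s - l) 1 hT; rewrite /IIIexpr => ->.
by rewrite (III_r1 l p t q0) addrC subrK.
Qed.

Lemma cond_lin (c1 : int -> C) (alpha : 'I_N -> C) :
  Cond q p t c1 ->
  Cond q p t (fun j => c1 j - \sum_k alpha k * ck k j).
Proof.
move=> h1 s.
have E : Cexpr q p t (fun j => c1 j - \sum_k alpha k * ck k j) s =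
         Cexpr q p t c1 s - \sum_k alpha k * Cexpr q p t (ck k) s.
  rewrite /Cexpr.
  under [X in _ - X]eq_bigr do rewrite mulr_sumr.
  rewrite [X in _ - X]exchange_big /= -sumrB; apply: eq_bigr => i _.
  rewrite !mulrBr !mulr_sumr; congr (_ - _).
  by apply: eq_bigr => k _; ring.
rewrite E h1 big1 ?subrr // => k _.
by rewrite (ck_cond k) mulr0.
Qed.

Lemma sum_delta (alpha : 'I_N -> C) (i0 : 'I_N) :
  \sum_k alpha k * ((i0 : nat) == (k : nat))%:R = alpha i0.
Proof.
rewrite (bigD1 i0) //= eqxx mulr1 big1 ?addr0 // => k nk.
rewrite (_ : ((i0 : nat) == (k : nat)) = false) ?mulr0 //; apply/negbTE.
by apply: contra nk => /eqP ik; apply/eqP; apply: val_inj.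
Qed.

Lemma dim_part :
  exists Ts : 'I_N -> (A -> C),
    [/\ forall k, is_twisted_trace g (Ts k),
        (forall c : 'I_N -> C,
           (forall a, \sum_k c k * Ts k a = 0) -> forall k, c k = 0)
      & forall T, is_twisted_trace g T ->
          exists c : 'I_N -> C, forall a, T a = \sum_k c k * Ts k a].
Proof.
exists Ts; split.
- exact: Ts_trace.
- move=> c hc k0; have := hc (Xp (bb + (k0 : nat)%:Z)).
  under eq_bigr do rewrite Ts_Xp (ck_init _ (ltn_ord k0)).
  by rewrite sum_delta.
move=> T htr; have [hT _ _] := trace_fwd hq gwa hg htr.
pose alpha (k : 'I_N) := T (Xp (bb + (k : nat)%:Z)).
exists alpha.
have lin2 : is_linform (fun a => \sum_k alpha k * Ts k a).
  move=> x a b /=; rewrite mulr_sumr -big_split /=; apply: eq_bigr => k _.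
  by rewrite /Ts (Tc_lin hq gwa) mulrDr mulrCA.
apply: (agree_basis hq gwa hT lin2) => i j /=.
case: (eqVneq i 0) => [->|i0].
  rewrite /= mul1r.
  have e : forall j, T (Xp j) - \sum_k alpha k * ck k j = 0.
    apply: (cond_uniq (cond_lin alpha (trace_cond htr))) => i1 iN /=.
    under eq_bigr do rewrite (ck_init _ iN).
    by rewrite (sum_delta alpha (Ordinal iN)) /alpha subrr.
  move/eqP: (e j); rewrite subr_eq0 => /eqP ->.
  by apply: eq_bigr => k _; rewrite Ts_Xp.
rewrite (wt_T hq gwa hg htr i0 (wtUXp hq gwa i j)) big1 // => k _.
by rewrite /Ts (Tc_wt hq gwa (ck k) i0 (wtUXp hq gwa i j)) mulr0.
Qed.

End Main.

End G8.
Import G8.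

Theorem proposition2p1 (R : realType) (q : R[i]) (l : int) (p : {poly R[i]})
  (A : algType R[i]) (u v Z Zi : A) (t : R[i]) (g : A -> A) :
  0 < `|q| < 1 ->
  p`_0 != 0 -> (1 < size p)%N ->
  is_gwa q l p u v Z Zi ->
  t != 0 ->
  is_gt t u v Z Zi g ->
  (forall T : A -> R[i],
     is_twisted_trace g T <->
     [/\ is_linform T,
         (forall (i : int) (a : A), i != 0 -> a \in weight_space q Z Zi i ->
            T a = 0)
       & forall (m : int) (r : {poly R[i]}),
           T (lpeval l p (q^-1 *: Z) (q *: Zi) * lpeval m r (q^-1 *: Z) (q *: Zi)
              - t *: (lpeval l p (q *: Z) (q^-1 *: Zi)
                      * lpeval m r (q *: Z) (q^-1 *: Zi))) = 0])
  /\
  exists Ts : 'I_(size p).-1 -> (A -> R[i]),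
    [/\ forall k, is_twisted_trace g (Ts k),
        (forall c : 'I_(size p).-1 -> R[i],
           (forall a, \sum_k c k * Ts k a = 0) -> forall k, c k = 0)
      & forall T, is_twisted_trace g T ->
          exists c : 'I_(size p).-1 -> R[i], forall a, T a = \sum_k c k * Ts k a].
Proof.
move=> hq p0 hsz gwa t0 hg; split.
  move=> T; split; first exact: (trace_fwd hq gwa hg).
  by case=> hT hw h3; exact: (trace_bwd hq gwa t0 hg hT hw h3).
exact: (dim_part hq p0 hsz gwa t0 hg).
Qed.
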